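(* If the dataset is balanced, i.e. $s_{N+1}=s_1$, then for every $\theta\in\mathbb R^d$, $$w(\theta)\le 2f_d(\theta).$$
   Context: Finite-sample setting. Let $\mathcal S$ be a finite state space, $\phi:\mathcal S\to\mathbb R^d$ a feature map with $\|\phi(s)\|_2\le 1$ for all $s$, $r:\mathcal S\times\mathcal S\to\mathbb R$ a reward function and $\gamma\in[0,1)$. For a pair of states $(s,s')$ and $\theta\in\mathbb R^d$ let $g_{s,s'}(\theta)=(r(s,s')+\gamma\phi(s')^T\theta-\phi(s)^T\theta)\phi(s)$. A dataset is a state trajectory $s_1,\dots,s_{N+1}$, giving the $N$ pairs $(s_t,s_{t+1})$, $t=1,\dots,N$. Let $A_d=\frac1N\sum_{t=1}^N\phi(s_t)(\phi(s_t)-\gamma\phi(s_{t+1}))^T$ and $b_d=\frac1N\sum_{t=1}^N r(s_t,s_{t+1})\phi(s_t)$. Assume $A_d$ is nonsingular and let $\theta^*=A_d^{-1}b_d$. Define $f_d(\theta)=(\theta-\theta^* )^TA_d(\theta-\theta^* )$ and $w(\theta)=\frac1N\sum_{t=1}^N\|g_{s_t,s_{t+1}}(\theta)-g_{s_t,s_{t+1}}(\theta^* )\|^2$. *)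

(* Defs.v *)
From mathcomp Require Import all_boot all_order all_algebra.
Set Implicit Arguments. Unset Strict Implicit. Unset Printing Implicit Defensive.
Import Order.TTheory GRing.Theory Num.Theory.
Local Open Scope ring_scope.

Definition sqnorm (R : realFieldType) (d : nat) (v : 'cV[R]_d) : R :=
  \sum_(i < d) v i 0 ^+ 2.

Definition dotv (R : realFieldType) (d : nat) (u v : 'cV[R]_d) : R :=
  (u^T *m v) 0 0.

Definition td_g (R : realFieldType) (S : finType) (d : nat)
  (phi : S -> 'cV[R]_d) (r : S -> S -> R) (gamma : R)
  (s s' : S) (theta : 'cV[R]_d) : 'cV[R]_d :=
  (r s s' + gamma * dotv (phi s') theta - dotv (phi s) theta) *: phi s.

(* The trajectory is traj : nat -> S, with the states s_1,...,s_{N+1}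
   represented as traj 0, ..., traj N; the pairs are (traj t, traj t.+1)
   for t = 0, ..., N-1. *)

Definition A_d (R : realFieldType) (S : finType) (d : nat)
  (phi : S -> 'cV[R]_d) (gamma : R) (N : nat) (traj : nat -> S) : 'M[R]_d :=
  N%:R^-1 *: \sum_(t < N) (phi (traj t) *m (phi (traj t) - gamma *: phi (traj t.+1))^T).

Definition b_d (R : realFieldType) (S : finType) (d : nat)
  (phi : S -> 'cV[R]_d) (r : S -> S -> R) (N : nat) (traj : nat -> S) : 'cV[R]_d :=
  N%:R^-1 *: \sum_(t < N) (r (traj t) (traj t.+1) *: phi (traj t)).

Definition theta_star (R : realFieldType) (S : finType) (d : nat)
  (phi : S -> 'cV[R]_d) (r : S -> S -> R) (gamma : R) (N : nat) (traj : nat -> S)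
  : 'cV[R]_d :=
  invmx (A_d phi gamma N traj) *m b_d phi r N traj.

Definition f_d (R : realFieldType) (S : finType) (d : nat)
  (phi : S -> 'cV[R]_d) (r : S -> S -> R) (gamma : R) (N : nat) (traj : nat -> S)
  (theta : 'cV[R]_d) : R :=
  let e := theta - theta_star phi r gamma N traj in
  ((e^T *m A_d phi gamma N traj) *m e) 0 0.

Definition w_fun (R : realFieldType) (S : finType) (d : nat)
  (phi : S -> 'cV[R]_d) (r : S -> S -> R) (gamma : R) (N : nat) (traj : nat -> S)
  (theta : 'cV[R]_d) : R :=
  let ts := theta_star phi r gamma N traj in
  N%:R^-1 * \sum_(t < N)
     sqnorm (td_g phi r gamma (traj t) (traj t.+1) theta
             - td_g phi r gamma (traj t) (traj t.+1) ts).

(* Main.v *)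
Require Import Defs.
From mathcomp Require Import all_boot all_order all_algebra.
From mathcomp Require Import ring lra.
Import Order.TTheory GRing.Theory Num.Theory.
Local Open Scope ring_scope.

Lemma dotvBr (R : realFieldType) d (u a b : 'cV[R]_d) :
  dotv u (a - b) = dotv u a - dotv u b.
Proof. by rewrite /dotv mulmxBr !mxE. Qed.

Lemma sqnormZ (R : realFieldType) d (c : R) (v : 'cV[R]_d) :
  sqnorm (c *: v) = c ^+ 2 * sqnorm v.
Proof.
rewrite /sqnorm mulr_sumr; apply: eq_bigr => i _; rewrite mxE; ring.
Qed.

Lemma sqnorm_ge0 (R : realFieldType) d (v : 'cV[R]_d) : 0 <= sqnorm v.
Proof. by apply: sumr_ge0 => i _; exact: sqr_ge0. Qed.

Lemma mx11_mul (R : realFieldType) (A B : 'M[R]_1) : (A *m B) 0 0 = A 0 0 * B 0 0.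
Proof. by rewrite mxE big_ord1. Qed.

Lemma shift_sum (R : realFieldType) (N : nat) (f : nat -> R) :
  (0 < N)%N -> f N = f 0%N -> \sum_(t < N) f t.+1 = \sum_(t < N) f t.
Proof.
case: N => // n _ H.
by rewrite big_ord_recr big_ord_recl /= H addrC.
Qed.

Theorem mainTheorem5 (R : realFieldType) (S : finType) (d : nat)
  (phi : S -> 'cV[R]_d) (r : S -> S -> R) (gamma : R) (N : nat) (traj : nat -> S) :
  (forall s : S, sqnorm (phi s) <= 1) ->
  0 <= gamma -> gamma < 1 ->
  (0 < N)%N ->
  A_d phi gamma N traj \in unitmx ->
  traj N = traj 0%N ->
  forall theta : 'cV[R]_d,
    w_fun phi r gamma N traj theta <= 2 * f_d phi r gamma N traj theta.
Proof.
move=> Hphi Hg0 Hg1 HN _ Hbal theta.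
rewrite /w_fun /f_d.
set ts := theta_star phi r gamma N traj.
set e := theta - ts.
pose x t := dotv (phi (traj t)) e.
have Hdiff t : td_g phi r gamma (traj t) (traj t.+1) theta
             - td_g phi r gamma (traj t) (traj t.+1) ts
             = (gamma * x t.+1 - x t) *: phi (traj t).
  rewrite /td_g -scalerBl /x !dotvBr; congr (_ *: _); ring.
have Hf : ((e^T *m A_d phi gamma N traj) *m e) 0 0
          = N%:R^-1 * \sum_(t < N) x t * (x t - gamma * x t.+1).
  rewrite /A_d -scalemxAr -scalemxAl mxE; congr (_ * _).
  rewrite mulmx_sumr mulmx_suml summxE; apply: eq_bigr => t _.
  rewrite (mulmxA e^T) -(mulmxA (e^T *m _)) mxE big_ord1.
  congr (_ * _).
    rewrite /x /dotv -[e^T *m _]trmxK trmx_mul trmxK mxE; done.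
  rewrite /x /dotv !mxE mulr_sumr -sumrB; apply: eq_bigr => j _; rewrite !mxE; ring.
rewrite Hf.
have Hinv : 0 <= N%:R^-1 :> R by rewrite invr_ge0 ler0n.
rewrite mulrA (mulrC 2) -mulrA; apply: ler_wpM2l => //.
apply: (@le_trans _ _ (\sum_(t < N) (x t - gamma * x t.+1) ^+ 2)).
  apply: ler_sum => t _; rewrite Hdiff sqnormZ.
  have := Hphi (traj t); have := @sqnorm_ge0 R d (phi (traj t)).
  have : 0 <= (gamma * x t.+1 - x t) ^+ 2 by exact: sqr_ge0.
  move=> h1 h2 h3.
  have -> : (x t - gamma * x t.+1) ^+ 2 = (gamma * x t.+1 - x t) ^+ 2 by ring.
  by rewrite -{2}(mulr1 ((gamma * x t.+1 - x t) ^+ 2)) ler_wpM2l.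
rewrite mulr_sumr -subr_ge0 -sumrB.
have -> : \sum_(t < N) (2 * (x t * (x t - gamma * x t.+1)) - (x t - gamma * x t.+1) ^+ 2)
        = \sum_(t < N) x t ^+ 2 - gamma ^+ 2 * \sum_(t < N) x t.+1 ^+ 2.
  rewrite mulr_sumr -sumrB; apply: eq_bigr => t _; ring.
have -> : \sum_(t < N) x t.+1 ^+ 2 = \sum_(t < N) x t ^+ 2.
  by apply: (@shift_sum R N (fun t => x t ^+ 2)) => //; rewrite /x Hbal.
have H0 : 0 <= \sum_(t < N) x t ^+ 2 by apply: sumr_ge0 => t _; exact: sqr_ge0.
have : gamma ^+ 2 <= 1 by nra.
nra.
Qed.
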